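(* Let $R$ be a commutative semiring and $\varphi:R\to U$ an m-supervaluation which is tangibly surjective, i.e. $\mathcal T(U)\subset\varphi(R)$. Let $N:=\varphi(R)$ (a submonoid of $U$ containing $\mathcal T(U)\cup\{0\}$), $M:=eU$, and let $\tilde U(N)$ be the unfolding of $U$ along $N$ described below. (i) The map $\tilde\varphi:R\to\tilde U(N)$, $a\mapsto\widetilde{\varphi(a)}$, is a tangible m-supervaluation. (ii) If $\varphi':R\to U'$ is a tangible m-supervaluation dominating $\varphi$, then $\varphi'$ dominates $\tilde\varphi$.
   Context: A supertropical monoid is a commutative monoid $U$ with absorbing $0$, idempotent $e$ with $ex=0\Rightarrow x=0$, and a total order on $M:=eU$ compatible with multiplication, with $0$ least, making $M$ a bipotent semiring (addition $=\max$). $\mathcal T(U):=U\setminus eU$. An m-supervaluation is a map $\varphi:R\to U$ with $\varphi(0)=0$, $\varphi(1)=1$, $\varphi(ab)=\varphi(a)\varphi(b)$, $e\varphi(a+b)\le\max(e\varphi(a),e\varphi(b))$; it is tangible if $\varphi(R)\subset\mathcal T(U)\cup\{0\}$. For m-supervaluations $\varphi:R\to U$, $\psi:R\to V$, $\varphi$ dominates $\psi$ if for all $a,b\in R$: $\varphi(a)=\varphi(b)\Rightarrow\psi(a)=\psi(b)$; $e\varphi(a)\le e\varphi(b)\Rightarrow e\psi(a)\le e\psi(b)$; $\varphi(a)\in eU\Rightarrow\psi(a)\in eV$. Unfolding: let $\tilde N=\{\tilde x:x\in N\}$ be a copy of the monoid $N$ (with $\tilde x\tilde y=\widetilde{xy}$).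 $\tilde U(N)$ is the set $\tilde N\cup M$ with $\tilde N\cap M=\{0\}$ (identifying $\tilde 0=0$), multiplication $\tilde x\cdot\tilde y=\widetilde{xy}$, $\tilde x\cdot y=(ex)y$ for $y\in M$, and the product of $M$ on $M$; its unit is $\tilde 1$, its idempotent is $e=1_M$, with $e\tilde U(N)=M$ carrying the order of $M$. Thus $\mathcal T(\tilde U(N))=\tilde N\setminus\{0\}$, and $\tilde x$ is called the tangible lift of $x\in N$. *)

(* Defs.v *)
From mathcomp Require Import all_boot all_algebra.
From Stdlib Require Import ClassicalEpsilon.
Import GRing.Theory.

(* Raw data of a supertropical monoid: carrier, product, unit, zero,
   idempotent e, and an order relation (only meaningful on M = eU). *)
Record ST_data := STData {
  stcar : Type;
  stmul : stcar -> stcar -> stcar;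
  stone : stcar;
  stzero : stcar;
  ste : stcar;
  stle : stcar -> stcar -> Prop }.

Set Implicit Arguments. Unset Strict Implicit. Unset Printing Implicit Defensive.

Section ST.
Variable U : ST_data.
Local Notation "x ** y" := (stmul U x y) (at level 40, left associativity).
Local Notation e := (ste U).
Local Notation O := (stzero U).

Definition inM (x : stcar U) : Prop := exists y, x = e ** y.

Definition tangible (x : stcar U) : Prop := ~ inM x.

Definition is_supertropical : Prop :=
  (forall x y z, x ** (y ** z) = (x ** y) ** z) /\
  (forall x y, x ** y = y ** x) /\
  (forall x, stone U ** x = x) /\
  (forall x, O ** x = O) /\
  e ** e = e /\
  (forall x, e ** x = O -> x = O) /\
  (forall x, inM x -> stle U x x) /\
  (forall x y, inM x -> inM y -> stle U x y -> stle U y x -> x = y) /\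
  (forall x y z, inM x -> inM y -> inM z ->
      stle U x y -> stle U y z -> stle U x z) /\
  (forall x y, inM x -> inM y -> stle U x y \/ stle U y x) /\
  (forall x y z, inM x -> inM y -> inM z ->
      stle U x y -> stle U (x ** z) (y ** z)) /\
  (forall x, inM x -> stle U O x).
End ST.

Definition m_supervaluation (R : comPzSemiRingType) (U : ST_data)
    (phi : R -> stcar U) : Prop :=
  [/\ is_supertropical U,
      phi 0%R = stzero U,
      phi 1%R = stone U,
      (forall a b, phi (a * b)%R = stmul U (phi a) (phi b)) &
      (forall a b, stle U (stmul U (ste U) (phi (a + b)%R)) (stmul U (ste U) (phi a))
                \/ stle U (stmul U (ste U) (phi (a + b)%R)) (stmul U (ste U) (phi b)))].

Definition tangible_m_supervaluation (R : comPzSemiRingType) (U : ST_data)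
    (phi : R -> stcar U) : Prop :=
  m_supervaluation phi /\ (forall a, phi a = stzero U \/ tangible (phi a)).

Definition dominates (R : comPzSemiRingType) (U V : ST_data)
    (phi : R -> stcar U) (psi : R -> stcar V) : Prop :=
  [/\ (forall a b, phi a = phi b -> psi a = psi b),
      (forall a b, stle U (stmul U (ste U) (phi a)) (stmul U (ste U) (phi b)) ->
                   stle V (stmul V (ste V) (psi a)) (stmul V (ste V) (psi b))) &
      (forall a, inM (phi a) -> inM (psi a))].

(* Unfolding of U along a subset N (intended: a submonoid containing
   T(U) u {0}).  Elements: tangible lifts ~x of nonzero x in N, and
   elements of M; ~0 is identified with 0 of M. *)
Section Unfold.
Variable U : ST_data.
Variable N : stcar U -> Prop.
Local Notation "x ** y" := (stmul U x y) (at level 40, left associativity).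
Local Notation e := (ste U).
Local Notation O := (stzero U).

Inductive unfold_car : Type :=
  | UT (x : stcar U) of (N x /\ x <> O)
  | UM (y : stcar U) of inM y.

(* embed an element of U which lies in M (fallback e*z never used
   when z is in M) *)
Definition toM (z : stcar U) : unfold_car :=
  match excluded_middle_informative (inM z) with
  | left h => UM h
  | right _ => @UM (e ** z) (ex_intro _ z erefl)
  end.

(* tangible lift ~x of x in N (with ~0 = 0) *)
Definition tlift (z : stcar U) : unfold_car :=
  match excluded_middle_informative (N z /\ z <> O) with
  | left h => UT h
  | right _ => toM z
  end.

Definition unfold_mul (a b : unfold_car) : unfold_car :=
  match a, b with
  | UT x _, UT y _ => tlift (x ** y)
  | UT x _, UM y _ => toM ((e ** x) ** y)
  | UM x _, UT y _ => toM (x ** (e ** y))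
  | UM x _, UM y _ => toM (x ** y)
  end.

Definition unfold_le (a b : unfold_car) : Prop :=
  match a, b with
  | UM x _, UM y _ => stle U x y
  | _, _ => False
  end.

Definition unfolding : ST_data :=
  @STData unfold_car unfold_mul (tlift (stone U)) (toM O) (toM e) unfold_le.
End Unfold.

(* Main.v *)
Require Import Defs.
From mathcomp Require Import all_boot all_algebra.
From Stdlib Require Import ProofIrrelevance ClassicalEpsilon Classical.

Set Implicit Arguments. Unset Strict Implicit. Unset Printing Implicit Defensive.

Section Unf.
Variable U : ST_data.
Variable N : stcar U -> Prop.
Hypothesis HU : is_supertropical U.
Hypothesis HN1 : N (stone U).
Hypothesis HNm : forall x y, N x -> N y -> N (stmul U x y).
Local Notation "x ** y" := (stmul U x y) (at level 40, left associativity).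
Local Notation e := (ste U).
Local Notation O := (stzero U).

Lemma mA x y z : x ** (y ** z) = (x ** y) ** z. Proof. by case: HU. Qed.
Lemma mC x y : x ** y = y ** x. Proof. by case: HU => _ []. Qed.
Lemma m1 x : stone U ** x = x. Proof. by case: HU => _ [_ []]. Qed.
Lemma m0 x : O ** x = O. Proof. by case: HU => _ [_ [_ []]]. Qed.
Lemma ee : e ** e = e. Proof. by case: HU => _ [_ [_ [_ []]]]. Qed.
Lemma e0 x : e ** x = O -> x = O. Proof. case: HU => _ [_ [_ [_ [_ [h _]]]]]; exact: h. Qed.
Lemma m0r x : x ** O = O. Proof. by rewrite mC m0. Qed.
Lemma eK z : e ** (e ** z) = e ** z. Proof. by rewrite mA ee. Qed.
Lemma emv x y : x ** (e ** y) = e ** (x ** y).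
Proof. by rewrite mA (mC x e) -mA. Qed.

Definition val (a : unfold_car N) : stcar U :=
  match a with UT x _ => x | UM y _ => y end.
Definition tg (a : unfold_car N) : bool :=
  match a with UT _ _ => true | UM _ _ => false end.

Lemma inM_val a : tg a = false -> inM (val a).
Proof. by case: a. Qed.
Lemma valUM a : tg a = false -> e ** val a = val a.
Proof. by case: a => //= y [w ->] _; rewrite eK. Qed.
Lemma valUT a : tg a = true -> val a <> O.
Proof. by case: a => //= x [_ h]. Qed.

Lemma eq_unf a b : val a = val b -> tg a = tg b -> a = b.
Proof.
case: a => [x p|x p]; case: b => [y q|y q] //= exy _; subst y;
  by rewrite (proof_irrelevance _ p q).
Qed.

Lemma val_toM z : val (toM N z) = e ** z.
Proof.
rewrite /toM; case: excluded_middle_informative => [h|_] //=.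
by case: h => w ->; rewrite eK.
Qed.
Lemma tg_toM z : tg (toM N z) = false.
Proof. by rewrite /toM; case: excluded_middle_informative. Qed.

Lemma val_tlift z : N z -> val (tlift N z) = z.
Proof.
move=> Nz; rewrite /tlift; case: excluded_middle_informative => [h|h] //=.
rewrite val_toM.
have -> : z = O by apply: NNPP => hz; apply: h.
by rewrite mC m0.
Qed.
Lemma tg_tlift z : N z -> (tg (tlift N z) <-> z <> O).
Proof.
move=> Nz; rewrite /tlift; case: excluded_middle_informative => [[_ h]|h] //=.
rewrite tg_toM; split=> // hz; by case: h.
Qed.

Lemma val_mul a b : val (unfold_mul a b) = val a ** val b.
Proof.
case: a => [x p|x p]; case: b => [y q|y q] /=.
- by rewrite val_tlift; case: p; case: q; auto.
- rewrite val_toM -mA eK -emv.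
  by have := valUM (a:=@UM U N y q) erefl => /= ->.
- rewrite val_toM emv eK mA.
  by have := valUM (a:=@UM U N x p) erefl => /= ->.
- rewrite val_toM mA.
  by have := valUM (a:=@UM U N x p) erefl => /= ->.
Qed.

Lemma tg_mul a b :
  tg (unfold_mul a b) <-> [/\ tg a, tg b & val a ** val b <> O].
Proof.
case: a => [x p|x p]; case: b => [y q|y q] /=;
  try by rewrite tg_toM; split => // -[].
rewrite tg_tlift; last by case: p; case: q; auto.
by split => [h|[]].
Qed.

Lemma biff (b1 b2 : bool) : (b1 <-> b2) -> b1 = b2.
Proof. by case: b1; case: b2 => // -[h1 h2]; [have := h1 isT | have := h2 isT]. Qed.

Definition one := tlift N (stone U).
Definition zero := toM N O.
Definition eu := toM N e.

Lemma val_one : val one = stone U. Proof. by rewrite val_tlift. Qed.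

Lemma inM_unf a : inM (U := unfolding N) a <-> tg a = false.
Proof.
split.
- move=> [y ->] /=; apply/negP => /tg_mul [].
  by rewrite tg_toM.
- move=> ha; exists a; apply: eq_unf => /=.
  + by rewrite val_mul val_toM ee valUM.
  + by rewrite ha; apply/esym/negP => /tg_mul []; rewrite tg_toM.
Qed.

Lemma le_unf a b : unfold_le a b <-> [/\ tg a = false, tg b = false & stle U (val a) (val b)].
Proof. by case: a => [x p|x p]; case: b => [y q|y q] //=; split => // -[]. Qed.

Lemma val_eu x : val (unfold_mul (toM N e) x) = e ** val x.
Proof. by rewrite val_mul val_toM ee. Qed.
Lemma tg_eu x : tg (unfold_mul (toM N e) x) = false.
Proof. by apply/negP => /tg_mul []; rewrite tg_toM. Qed.

Lemma is_st : is_supertropical (unfolding N).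
Proof.
have [_ [_ [_ [_ [_ [_ [Rf [As [Tr [Tot [Cp Lo]]]]]]]]]]] := HU.
split; [|split; [|split; [|split; [|split; [|split; [|split; [|split;
  [|split; [|split; [|split]]]]]]]]]] => /=.
- move=> x y z; apply: eq_unf; first by rewrite !val_mul mA.
  apply: biff; split.
  + move/tg_mul; rewrite val_mul; move=> [tx /tg_mul [ty tz _] h].
    apply/tg_mul; rewrite val_mul; split => //; last by rewrite -mA.
    apply/tg_mul; split => // h'; apply: h; by rewrite mA h' m0.
  + move/tg_mul; rewrite val_mul; move=> [/tg_mul [tx ty _] tz h].
    apply/tg_mul; rewrite val_mul; split => //; last by rewrite mA.
    apply/tg_mul; split => // h'; apply: h; by rewrite -mA h' m0r.
- move=> x y; apply: eq_unf; first by rewrite !val_mul mC.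
  by apply: biff; rewrite !tg_mul mC; split => -[].
- move=> x; apply: eq_unf; first by rewrite val_mul val_one m1.
  apply: biff; rewrite tg_mul val_one m1; split => [[]//|tx].
  have hx := valUT tx; split => //.
  apply/tg_tlift => // h1; apply: hx; by rewrite -(m1 (val x)) h1 m0.
- move=> x; apply: eq_unf; first by rewrite val_mul !val_toM !(mC e O) !m0.
  by rewrite tg_toM; apply/negP => /tg_mul []; rewrite tg_toM.
- apply: eq_unf; first by rewrite val_mul !val_toM !ee.
  by rewrite tg_toM; apply/negP => /tg_mul []; rewrite tg_toM.
- move=> x h; apply: eq_unf.
  + move: (f_equal val h); rewrite val_mul !val_toM ee (mC e O) m0 => /e0 ->.
    done.
  + rewrite tg_toM; apply/negP => tx; apply: (valUT tx).
    by move: (f_equal val h); rewrite val_mul !val_toM ee (mC e O) m0 => /e0.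
- by move=> x /inM_unf hx; apply/le_unf; split => //; apply: Rf; apply: inM_val.
- move=> x y /inM_unf hx /inM_unf hy /le_unf [_ _ h1] /le_unf [_ _ h2].
  apply: eq_unf; last by rewrite hx hy.
  by apply: As => //; apply: inM_val.
- move=> x y z /inM_unf hx /inM_unf hy /inM_unf hz /le_unf [_ _ h1] /le_unf [_ _ h2].
  apply/le_unf; split => //; apply: Tr h1 h2; by apply: inM_val.
- move=> x y /inM_unf hx /inM_unf hy.
  have [h|h] := Tot _ _ (inM_val hx) (inM_val hy); [left|right];
    apply/le_unf; by split.
- move=> x y z /inM_unf hx /inM_unf hy /inM_unf hz /le_unf [_ _ h1].
  have nt : forall a b, tg a = false -> tg (unfold_mul a b) = false.
    by move=> a b ha; apply/negP => /tg_mul [] ; rewrite ha.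
  apply/le_unf; split; try by apply: nt.
  rewrite !val_mul; apply: Cp => //; by apply: inM_val.
- move=> x /inM_unf hx; apply/le_unf; split => //; first by rewrite tg_toM.
  rewrite val_toM (mC e O) m0; apply: Lo; by apply: inM_val.
Qed.

End Unf.

Theorem theorem7p10 (R : comPzSemiRingType) (U : ST_data) (phi : R -> stcar U) :
  m_supervaluation phi ->
  (forall x : stcar U, tangible x -> exists a, phi a = x) ->
  let N := fun x : stcar U => exists a, phi a = x in
  let phit := fun a : R => (tlift N (phi a) : stcar (unfolding N)) in
  tangible_m_supervaluation phit /\
  (forall (U' : ST_data) (phi' : R -> stcar U'),
     tangible_m_supervaluation phi' -> dominates phi' phi -> dominates phi' phit).
Proof.
move=> hphi _ N phit.
have [HU p0 p1 pM pA] := hphi.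
have HN1 : N (stone U) by exists 1%R.
have HNm : forall x y, N x -> N y -> N (stmul U x y).
  by move=> x y [a <-] [b <-]; exists (a * b)%R; apply: pM.
have vM := val_mul HU HNm. have tM := tg_mul HNm. have vT := val_toM N HU.
have iU := inM_unf HU HNm. have vE := val_eu HU HNm. have tE := tg_eu HNm.
have mCU := mC HU. have m0U := m0 HU. have m0rU := m0r HU.
have vph c : val (phit c) = phi c by rewrite /phit val_tlift //; exists c.
have tph c : tg (phit c) <-> phi c <> stzero U by apply: (tg_tlift (N:=N)); exists c.
have leE a b : stle (unfolding N) (stmul (unfolding N) (ste (unfolding N)) (phit a))
    (stmul (unfolding N) (ste (unfolding N)) (phit b))
    <-> stle U (stmul U (ste U) (phi a)) (stmul U (ste U) (phi b)).
  rewrite /= le_unf !vE !vph !tE.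
  by split => [[]//|h].
split.
- split.
  + split.
    * exact: is_st HU HN1 HNm.
    * apply: eq_unf => /=; first by rewrite vph p0 vT mCU m0U.
      by rewrite tg_toM; apply/negP => /tph; rewrite p0.
    * by rewrite /phit p1.
    * move=> a b; apply: eq_unf => /=; first by rewrite vM !vph pM.
      apply: biff; split.
      - move=> /tph h; apply/tM; rewrite !vph -pM; split => //; apply/tph => h'.
          by apply: h; rewrite pM h' m0U.
        by apply: h; rewrite pM h' m0rU.
      - by move=> /tM [_ _]; rewrite !vph -pM => h; apply/tph.
    * by move=> a b; case: (pA a b) => h; [left|right]; apply/leE.
  + move=> a; case ht: (tg (phit a)).
    * by right => /iU; rewrite ht.
    * left; apply: eq_unf => /=; last by rewrite ht tg_toM.
      rewrite vph vT mCU m0U; apply: NNPP => h.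
      by move/tph: h; rewrite ht.
- move=> U' phi' [[HU' p0' _ _ _] tph'] [d1 d2 d3]; split.
  + by move=> a b /d1; rewrite /phit => ->.
  + by move=> a b /d2 h; apply/leE.
  + move=> a ia; case: (tph' a) => h.
    * rewrite -p0' in h; have := d1 _ _ h; rewrite p0 => h2.
      by apply/iU; apply/negP => /tph.
    * by case: h.
Qed.
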